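(* Let $L$ be a PG-lattice and $M$ a faithful multiplication PG-lattice $L$-module. Then for every family $\{a_\alpha\mid\alpha\in\Delta\}\subseteq L$, $$\bigwedge_{\alpha\in\Delta}(a_\alpha I_M)=\Big(\bigwedge_{\alpha\in\Delta}a_\alpha\Big)I_M.$$
   Context: $L$ is a multiplicative lattice (complete lattice with commutative, associative multiplication distributing over arbitrary joins, identity $1$, least $0$), compactly generated, $1$ compact, finite products of compact elements compact. An $L$-module is a complete lattice $M$ (least $O_M$, greatest $I_M$) with product $aB\in M$ satisfying $(\bigvee a_\alpha)A=\bigvee(a_\alpha A)$, $a(\bigvee A_\alpha)=\bigvee(aA_\alpha)$, $(ab)A=a(bA)$, $1A=A$, $0A=O_M$. $(A:B)=\bigvee\{x\in L:xB\leqslant A\}$ for $A,B\in M$; $(a:b)=\bigvee\{x\in L:xb\leqslant a\}$ for $a,b\in L$. $e\in L$ is principal if $a\wedge be=((a:e)\wedge b)e$ and $(ae\vee b):e=(b:e)\vee a$ for all $a,b\in L$; $L$ is a PG-lattice if every element is a join of principal elements. $N\in M$ is principal if $(b\wedge(B:N))N=bN\wedge B$ and $b\vee(B:N)=((bN\vee B):N)$ for all $b\in L,B\in M$; $M$ is a PG-lattice module if every element is a join of principal elements. $M$ is faithful if $(O_M:I_M)=0$; a multiplication module if every $N\in M$ equals $aI_M$ for some $a\in L$. *)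

(* Defs.v *)
From Stdlib Require Import List.

Definition image {A B : Type} (f : A -> B) (S : A -> Prop) : B -> Prop :=
  fun y => exists x, S x /\ y = f x.

Record complete_lattice (T : Type) := CompleteLattice {
  le : T -> T -> Prop;
  sup : (T -> Prop) -> T;
  le_refl : forall x, le x x;
  le_trans : forall x y z, le x y -> le y z -> le x z;
  le_antisym : forall x y, le x y -> le y x -> x = y;
  sup_ub : forall S x, S x -> le x (sup S);
  sup_least : forall S y, (forall x, S x -> le x y) -> le (sup S) y
}.
Arguments le {T} c _ _.
Arguments sup {T} c _.

Section CL.
Context {T : Type} (c : complete_lattice T).
Definition inf (S : T -> Prop) : T := sup c (fun y => forall x, S x -> le c y x).
Definition bot : T := sup c (fun _ => False).
Definition top : T := sup c (fun _ => True).
Definition join2 (x y : T) : T := sup c (fun z => z = x \/ z = y).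
Definition meet2 (x y : T) : T := inf (fun z => z = x \/ z = y).
Definition compact (x : T) : Prop :=
  forall S, le c x (sup c S) ->
    exists l : list T, (forall y, In y l -> S y) /\ le c x (sup c (fun y => In y l)).
End CL.

Record mult_lattice := MultLattice {
  ml_car :> Type;
  ml_cl : complete_lattice ml_car;
  mul : ml_car -> ml_car -> ml_car;
  mul_comm : forall a b, mul a b = mul b a;
  mul_assoc : forall a b c, mul a (mul b c) = mul (mul a b) c;
  mul_sup : forall a S, mul a (sup ml_cl S) = sup ml_cl (image (mul a) S);
  mul_top_l : forall a, mul (top ml_cl) a = a;
  ml_comp_gen : forall x, exists S, (forall y, S y -> compact ml_cl y) /\ x = sup ml_cl S;
  ml_top_compact : compact ml_cl (top ml_cl);
  ml_mul_compact : forall a b, compact ml_cl a -> compact ml_cl b -> compact ml_cl (mul a b)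
}.
Arguments mul {m} _ _.

Definition lcolon {L : mult_lattice} (a b : L) : L :=
  sup (ml_cl L) (fun x => le (ml_cl L) (mul x b) a).

Definition principal {L : mult_lattice} (e : L) : Prop :=
  (forall a b : L, meet2 (ml_cl L) a (mul b e) = mul (meet2 (ml_cl L) (lcolon a e) b) e) /\
  (forall a b : L, lcolon (join2 (ml_cl L) (mul a e) b) e = join2 (ml_cl L) (lcolon b e) a).

Definition PG_lattice (L : mult_lattice) : Prop :=
  forall x : L, exists S, (forall e, S e -> principal e) /\ x = sup (ml_cl L) S.

Record lmodule (L : mult_lattice) := LModule {
  lm_car :> Type;
  lm_cl : complete_lattice lm_car;
  act : L -> lm_car -> lm_car;
  act_sup_l : forall S A, act (sup (ml_cl L) S) A = sup lm_cl (image (fun a => act a A) S);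
  act_sup_r : forall a S, act a (sup lm_cl S) = sup lm_cl (image (act a) S);
  act_assoc : forall a b A, act (mul a b) A = act a (act b A);
  act_one : forall A, act (top (ml_cl L)) A = A;
  act_zero : forall A, act (bot (ml_cl L)) A = bot lm_cl
}.
Arguments lm_cl {L} _.
Arguments act {L l} _ _.

Section Mod.
Context {L : mult_lattice} (M : lmodule L).
Definition I_M : M := top (lm_cl M).
Definition O_M : M := bot (lm_cl M).
Definition mcolon (A B : M) : L :=
  sup (ml_cl L) (fun x => le (lm_cl M) (act x B) A).
Definition mprincipal (N : M) : Prop :=
  (forall (b : L) (B : M),
      act (meet2 (ml_cl L) b (mcolon B N)) N = meet2 (lm_cl M) (act b N) B) /\
  (forall (b : L) (B : M),
      join2 (ml_cl L) b (mcolon B N) = mcolon (join2 (lm_cl M) (act b N) B) N).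
Definition PG_module : Prop :=
  forall N : M, exists S, (forall P, S P -> mprincipal P) /\ N = sup (lm_cl M) S.
Definition faithful : Prop := mcolon O_M I_M = bot (ml_cl L).
Definition multiplication_module : Prop := forall N : M, exists a : L, N = act a I_M.
End Mod.

(* Main.v *)
Require Import Defs.

Section Gen.
Context {T : Type} (c : complete_lattice T).
Lemma lrefl x : le c x x. Proof. apply le_refl. Qed.
Lemma ltrans x y z : le c x y -> le c y z -> le c x z. Proof. apply le_trans. Qed.
Lemma lanti x y : le c x y -> le c y x -> x = y. Proof. apply le_antisym. Qed.
Lemma sub S x : S x -> le c x (sup c S). Proof. apply sup_ub. Qed.
Lemma sleast S y : (forall x, S x -> le c x y) -> le c (sup c S) y. Proof. apply sup_least. Qed.
Lemma inf_lb (S : T -> Prop) x : S x -> le c (inf c S) x.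
Proof. intros Hx. unfold inf. apply sleast. intros y Hy. apply Hy, Hx. Qed.
Lemma inf_glb (S : T -> Prop) y : (forall x, S x -> le c y x) -> le c y (inf c S).
Proof. intros H. unfold inf. apply sub. exact H. Qed.
Lemma top_ge x : le c x (top c). Proof. unfold top. apply sub. exact I. Qed.
Lemma bot_le x : le c (bot c) x. Proof. unfold bot. apply sleast. intros _ []. Qed.
Lemma meet2_eq_r x y : le c y x -> meet2 c x y = y.
Proof.
  intros H. unfold meet2. apply lanti.
  - apply inf_lb. now right.
  - apply inf_glb. intros z [->| ->]; [exact H | apply lrefl].
Qed.
Lemma join2_r x y : le c y (join2 c x y). Proof. apply sub. now right. Qed.
Lemma join2_eq x y : le c x y -> join2 c x y = y.
Proof.
  intros H. apply lanti.
  - apply sleast. intros z [->| ->]; [exact H | apply lrefl].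
  - apply join2_r.
Qed.
End Gen.

Section Main.
Context (L : mult_lattice) (M : lmodule L).
Notation cL := (ml_cl L).
Notation cM := (lm_cl M).

Lemma act_mono_l (a b : L) (A : M) : le cL a b -> le cM (act a A) (act b A).
Proof.
  intros H. rewrite <- (join2_eq cL a b H). unfold join2. rewrite act_sup_l.
  apply sub. exists a. split; auto.
Qed.
Lemma act_mono_r (a : L) (A B : M) : le cM A B -> le cM (act a A) (act a B).
Proof.
  intros H. rewrite <- (join2_eq cM A B H). unfold join2. rewrite act_sup_r.
  apply sub. exists A. split; auto.
Qed.
Lemma mul_mono_r (a b d : L) : le cL b d -> le cL (mul a b) (mul a d).
Proof.
  intros H. rewrite <- (join2_eq cL b d H). unfold join2. rewrite mul_sup.
  apply sub. exists b. split; auto.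
Qed.
Lemma mul_le_l (a b : L) : le cL (mul a b) a.
Proof.
  apply ltrans with (mul a (top cL)). apply mul_mono_r, top_ge.
  rewrite mul_comm, mul_top_l. apply lrefl.
Qed.
Lemma act_colon (B N : M) : le cM (act (mcolon M B N) N) B.
Proof.
  unfold mcolon. rewrite act_sup_l. apply sleast. intros x [y [Hy ->]]. exact Hy.
Qed.
Lemma colon_ub (x : L) (B N : M) : le cM (act x N) B -> le cL x (mcolon M B N).
Proof. intros H. unfold mcolon. apply sub. exact H. Qed.

Lemma mult_eq (Hm : multiplication_module M) (Q : M) :
  Q = act (mcolon M Q (I_M M)) (I_M M).
Proof.
  apply (lanti (lm_cl M)); [|apply act_colon].
  destruct (Hm Q) as [c0 Hc]. rewrite Hc at 1. apply act_mono_l, colon_ub.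
  rewrite <- Hc. apply lrefl.
Qed.
End Main.

Theorem lemma3p3 (L : mult_lattice) (M : lmodule L)
  (HL : PG_lattice L) (Hf : faithful M) (Hm : multiplication_module M)
  (HPG : PG_module M) (Delta : Type) (a : Delta -> L) :
  inf (lm_cl M) (fun N => exists i : Delta, N = act (a i) (I_M M)) =
  act (inf (ml_cl L) (fun x => exists i : Delta, x = a i)) (I_M M).
Proof.
  set (X := inf (lm_cl M) (fun N => exists i : Delta, N = act (a i) (I_M M))).
  set (d := inf (ml_cl L) (fun x => exists i : Delta, x = a i)).
  assert (HXa : forall i, le (lm_cl M) X (act (a i) (I_M M))).
  { intros i. apply inf_lb. now exists i. }
  apply (lanti (lm_cl M)).
  2:{ apply inf_glb. intros N [i ->]. apply act_mono_l, inf_lb. now exists i. }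
  assert (Key : forall Q : M, mprincipal M Q ->
            le (lm_cl M) (act (mcolon M Q (I_M M)) X) (act d (I_M M))).
  { intros Q [Hmeet Hjoin].
    set (q := mcolon M Q (I_M M)).
    assert (HQ : Q = act q (I_M M)) by apply (mult_eq L M Hm).
    set (B := act q X).
    set (s := mcolon M B Q).
    assert (HBQ : le (lm_cl M) B Q).
    { unfold B. rewrite HQ. apply act_mono_r. apply top_ge. }
    assert (HB : B = act s Q).
    { specialize (Hmeet (top (ml_cl L)) B).
      rewrite (meet2_eq_r _ _ _ (top_ge _ _)) in Hmeet.
      rewrite act_one in Hmeet. rewrite (meet2_eq_r _ _ _ HBQ) in Hmeet.
      symmetry. exact Hmeet. }
    set (o := mcolon M (O_M M) Q).
    assert (Hqo : le (ml_cl L) (mul q o) (bot (ml_cl L))).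
    { unfold faithful in Hf. rewrite <- Hf. apply colon_ub.
      rewrite mul_comm, act_assoc. fold q. rewrite <- HQ. apply act_colon. }
    assert (Hsq : le (ml_cl L) (mul s q) d).
    { apply inf_glb. intros x [i ->].
      assert (Hs : le (ml_cl L) s (join2 (ml_cl L) (a i) o)).
      { unfold o. rewrite (Hjoin (a i) (O_M M)). apply colon_ub.
        apply ltrans with B. apply act_colon.
        apply ltrans with (act (a i) Q).
        - unfold B. apply ltrans with (act q (act (a i) (I_M M))).
          + apply act_mono_r, HXa.
          + rewrite <- act_assoc, mul_comm, act_assoc. fold q. rewrite <- HQ. apply lrefl.
        - apply sub. now left. }
      rewrite mul_comm. apply ltrans with (mul q (join2 (ml_cl L) (a i) o)).
      - apply mul_mono_r, Hs.
      - unfold join2. rewrite mul_sup. apply sleast. intros y [z [[-> | ->] ->]].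
        + rewrite mul_comm. apply mul_le_l.
        + apply ltrans with (bot (ml_cl L)). exact Hqo. apply bot_le. }
    fold B. rewrite HB, HQ, <- act_assoc. apply act_mono_l, Hsq. }
  destruct (Hm X) as [c0 Hc].
  destruct (HPG (I_M M)) as [S [HS HI]].
  assert (HX2 : X = sup (lm_cl M) (image (act c0) S)).
  { rewrite Hc at 1. rewrite HI at 1. apply act_sup_r. }
  rewrite HX2 at 1. apply sleast. intros y [Q [HSQ ->]].
  apply ltrans with (act (mcolon M Q (I_M M)) X); [|apply Key, HS, HSQ].
  rewrite (mult_eq L M Hm Q) at 1. rewrite <- act_assoc, mul_comm, act_assoc, <- Hc.
  apply lrefl.
Qed.
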